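(* Let $\Bbbk$ be a field and let $n,k$ be integers with $1 < k < n$. For each subset $I\subseteq\{0,\ldots,n\}$ of size $k+1$, let $\mathbb{P}^k_I$ be a copy of $\mathbb{P}^k$ with homogeneous coordinates $(x^I_j)_{j\in I}$, and let $U\subset \prod_I \mathbb{P}^k_I$ be the set of points $(P_I)_I$ all of whose coordinates $x^I_j$ are nonzero. Let $V\subseteq U$ be the set of $(P_I)_I\in U$ for which there exists a point $P=(x_0:\cdots:x_n)\in\mathbb{P}^n$ with $P_I = (x_j)_{j\in I}$ (as a point of $\mathbb{P}^k_I$) for every $I$. Let $M_{n,k}$ be the partially specified $\binom{n+1}{k+1}\times(n+1)$ matrix with rows indexed by the subsets $I$ and columns indexed by $j\in\{0,\ldots,n\}$, whose $(I,j)$ entry is $x^I_j$ if $j\in I$ and is unspecified otherwise. Then $V$ is the set of points of $U$ at which all $2\times 2$ minors of $M_{n,k}$ containing no unspecified entries vanish, i.e. the set of $(P_I)_I\in U$ such that \[ x^I_i x^J_j - x^I_j x^J_i = 0 \] for all subsets $I,J$ of size $k+1$ and all $i,j\in I\cap J$.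
   Context: $\mathbb{P}^m$ denotes projective $m$-space over $\Bbbk$, points written in homogeneous coordinates up to a common nonzero scalar. For $I=\{i_0<\cdots<i_k\}$, the projection $\pi_I\colon\mathbb{P}^n\dashrightarrow\mathbb{P}^k$, $(x_0:\cdots:x_n)\mapsto(x_{i_0}:\cdots:x_{i_k})$, is the projection of $\mathbb{P}^n$ onto the coordinate subspace $\langle I\rangle=\{x_j=0 \text{ for } j\notin I\}$; $V$ is the intersection of $U$ with the image of the rational map $\mathbb{P}^n\dashrightarrow\prod_I\mathbb{P}^k_I$ whose components are the $\pi_I$. Geometrically, a point of $U$ is a choice of a point in (the span of) each $k$-dimensional face of the coordinate $n$-simplex, and $V$ is the locus where these are all projections of one point of $\mathbb{P}^n$. *)

(* Defs.v *)
From mathcomp Require Import all_boot all_order all_algebra.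
Set Implicit Arguments. Unset Strict Implicit. Unset Printing Implicit Defensive.
Import GRing.Theory.
Local Open Scope ring_scope.

(* Index set {0,...,n} is 'I_n.+1.  A family of points (P_I)_I of the
   product of the P^k_I is given by homogeneous coordinate representatives
   x : {set 'I_n.+1} -> 'I_n.+1 -> K, where x I j is the coordinate x^I_j
   (only the values for #|I| = k+1 and j \in I are meaningful). *)
Definition coord_family (K : fieldType) (n : nat) :=
  {set 'I_n.+1} -> 'I_n.+1 -> K.

Definition ksub (n k : nat) (I : {set 'I_n.+1}) : bool := #|I| == k.+1.

Definition inU (K : fieldType) (n k : nat) (x : coord_family K n) : Prop :=
  forall I : {set 'I_n.+1}, ksub k I -> forall j, j \in I -> x I j != 0.

Definition same_proj_point (K : fieldType) (n : nat) (I : {set 'I_n.+1})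
    (u v : 'I_n.+1 -> K) : Prop :=
  exists c : K, c != 0 /\ forall j, j \in I -> u j = c * v j.

Definition inV (K : fieldType) (n k : nat) (x : coord_family K n) : Prop :=
  inU k x /\
  exists P : 'I_n.+1 -> K, (exists j, P j != 0) /\
    forall I : {set 'I_n.+1}, ksub k I -> same_proj_point I (x I) P.

(* Main.v *)
Require Import Defs.
From mathcomp Require Import all_boot all_order all_algebra.
From mathcomp Require Import ring.
Local Open Scope ring_scope.
Import GRing.Theory.

Lemma ext_sub (n : nat) (A : {set 'I_n.+1}) (m : nat) :
  (m <= n.+1)%N -> (#|A| <= m)%N -> exists T : {set 'I_n.+1}, A \subset T /\ #|T| = m.
Proof.
elim: m => [|m IH] hm hA.
  exists A; split => //; apply/eqP; by rewrite -leqn0.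
case: (ltngtP #|A| m.+1) => [hlt||heq]; last by exists A.
- have [T [sAT cT]] := IH (ltnW hm) hlt.
  have : ~~ (setT \subset T).
    apply/negP => /subset_leq_card; rewrite cardsT card_ord cT.
    by rewrite leqNgt hm.
  case/subsetPn => y _ yT.
  exists (y |: T); split; first by apply: subsetU; apply/orP; right.
  by rewrite cardsU1 yT cT.
- by move=> h; rewrite ltnNge hA in h.
Qed.

Lemma ext3 (n k : nat) (a b c : 'I_n.+1) : (1 < k)%N -> (k <= n)%N ->
  exists T : {set 'I_n.+1}, ksub k T /\ [/\ a \in T, b \in T & c \in T].
Proof.
move=> hk hkn.
have hA : (#|a |: (b |: [set c])| <= k.+1)%N.
  rewrite cardsU1 cardsU1 cards1.
  apply: (@leq_trans 3); last by [].
  by case: (a \notin _); case: (b \notin _).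
have [T [sAT cT]] := ext_sub n _ k.+1 hkn hA.
exists T; split; first by rewrite /ksub cT.
split; apply: (subsetP sAT); rewrite !inE eqxx ?orbT //.
Qed.

Theorem mainTheorem2 (K : fieldType) (n k : nat) (hk1 : (1 < k)%N) (hkn : (k < n)%N)
    (x : coord_family K n) (hU : inU k x) :
  inV k x <->
  (forall I J : {set 'I_n.+1}, ksub k I -> ksub k J ->
     forall i j : 'I_n.+1, i \in I :&: J -> j \in I :&: J ->
       x I i * x J j - x I j * x J i = 0).
Proof.
have hkn' : (k <= n)%N by apply: ltnW.
split.
  case=> _ [P [_ HP]] I J kI kJ i j.
  rewrite !inE => /andP [iI iJ] /andP [jI jJ].
  have [cI [_ HI]] := HP I kI.
  have [cJ [_ HJ]] := HP J kJ.
  rewrite HI // HJ // HI // HJ //.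
  by rewrite !mulrA [cI * P i * cJ]mulrAC [cI * P j * cJ]mulrAC -!mulrA [P i * P j]mulrC subrr.
move=> Hm.
pose z : 'I_n.+1 := ord0.
pose S (j : 'I_n.+1) : {set 'I_n.+1} :=
  odflt set0 [pick T : {set 'I_n.+1} | ksub k T && (z \in T) && (j \in T)].
have HS : forall j, [/\ ksub k (S j), z \in S j & j \in S j].
  move=> j; rewrite /S; case: pickP => [T /andP [/andP [? ?] ?] //|].
  have [T [kT [zT jT _]]] := ext3 _ _ z j j hk1 hkn'.
  by move/(_ T); rewrite kT zT jT.
pose P (j : 'I_n.+1) := x (S j) j / x (S j) z.
have key : forall T j, ksub k T -> z \in T -> j \in T -> P j = x T j / x T z.
  move=> T j kT zT jT.
  have [kS zS jS] := HS j.
  have h := Hm T (S j) kT kS z j.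
  rewrite !inE zT zS jT jS in h.
  have /eqP := h isT isT; rewrite subr_eq0 => /eqP e.
  have nT := hU T kT z zT; have nS := hU (S j) kS z zS.
  rewrite /P; apply/eqP; rewrite eq_sym eqr_div //; apply/eqP.
  by rewrite -e mulrC.
have Pnz : forall j, P j != 0.
  move=> j; have [kS zS jS] := HS j.
  rewrite /P; apply: mulf_neq0; last rewrite invr_eq0; exact: hU.
split => //.
exists P; split; first by exists z.
move=> I kI.
have : (0 < #|I|)%N by move/eqP: kI => ->.
case/card_gt0P => a aI.
exists (x I a / P a); split.
  by rewrite mulf_neq0 // ?invr_eq0 ?hU.
move=> j jI.
have [T [kT [zT aT jT]]] := ext3 _ _ z a j hk1 hkn'.
rewrite (key T a) // (key T j) //.
have h := Hm I T kI kT a j.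
rewrite !inE aI aT jI jT in h.
have /eqP := h isT isT; rewrite subr_eq0 => /eqP e.
have nTa := hU T kT a aT; have nTz := hU T kT z zT.
have -> : x I a / (x T a / x T z) * (x T j / x T z) = x I a * x T j / x T a.
  by field; rewrite nTa nTz.
by rewrite e mulfK.
Qed.
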